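(* Let $S_A>0$, $c_{\mathrm{TX}}>0$, $\phi>0$, $\theta=\phi/c_{\mathrm{TX}}$, $B\geq1$ an integer, and $0<\lambda<\lambda_{\mathrm{th}}=\left(\sqrt{1+1/S_A}+\sqrt{\theta}\right)^{-2}$. Let $$v_{\mathrm{th}}(\lambda,0)=\sqrt{\lambda\theta}+\frac{\lambda}{2}+\sqrt{\lambda}\sqrt{\sqrt{\lambda\theta}+\frac{\lambda}{4}+\frac{1}{S_A}}.$$ For $V_k\in(0,1]$, $\zeta\geq0$, $S_M\geq0$, let $\rho(\zeta)=\zeta e^{-\zeta}$, $\mathcal B_B(r;\rho)=\binom{B}{r}\rho^r(1-\rho)^{B-r}$, $\hat\nu(V,\Lambda)=V/(1+V\Lambda)$, and $$f(\zeta,S_M,V_k)=\sum_{r=0}^B\mathcal B_B(r;\rho(\zeta))\,\hat\nu\left(V_k,\frac{rS_AS_M}{S_A+S_M}\right)+\lambda\zeta B(1+\theta S_M).$$ The myopic policy $(\zeta^{(MP)}(V_k),S_M^{(MP)}(V_k))$ is a minimizer of $f(\cdot,\cdot,V_k)$ over $\zeta\geq0$, $S_M\geq0$ (with the convention $S_M=0$ when $\zeta=0$). Then: (i) if $V_k\leq v_{\mathrm{th}}(\lambda,0)$, then $(\zeta^{(MP)}(V_k),S_M^{(MP)}(V_k))=(0,0)$; (ii) otherwise, $(\zeta,S_M)=(\zeta^{(MP)}(V_k),S_M^{(MP)}(V_k))$ satisfies $\zeta\in(0,1)$, $S_M>0$, and simultaneously solves $h(S_M,\zeta,V_k)=0$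 and $g(S_M,\zeta,V_k)=0$, where, with $R\sim\mathcal B_B(\cdot;\rho(\zeta))$, $$h(S_M,\zeta,V_k)=-\mathbb E\left[\hat\nu\left(V_k,\frac{RS_AS_M}{S_A+S_M}\right)^2\frac{RS_A^2}{(S_A+S_M)^2}\right]+\lambda\zeta B\theta,$$ $$g(S_M,\zeta,V_k)=\mathbb E\left[\hat\nu\left(V_k,\frac{RS_AS_M}{S_A+S_M}\right)\frac{R-\rho(\zeta)B}{\rho(\zeta)(1-\rho(\zeta))}\right]+\lambda B\frac{e^{\zeta}}{1-\zeta}(1+\theta S_M).$$ Moreover, $$0<\zeta^{(MP)}(V_k)<\min\left\{1,2\ln\left(\frac{V_k}{\sqrt{\lambda\theta}}\right)\right\}$$ and $S_{M,\mathrm{th}}^{\min}\leq S_M^{(MP)}(V_k)\leq S_{M,\mathrm{th}}^{\max}$, where $$S_{M,\mathrm{th}}^{\min}=\frac{-\lambda\theta S_A-\lambda(1+V_kS_A)+V_k^2S_A-\sqrt{[(\lambda\theta+V_k^2)S_A-\lambda(1+V_kS_A)]^2-4\lambda\theta V_k^2S_A^2}}{2\lambda\theta(1+V_kS_A)},$$ $$S_{M,\mathrm{th}}^{\max}=\min\left\{\frac{-\lambda\theta S_A-\lambda(1+V_kS_A)+V_k^2S_A}{2\lambda\theta(1+V_kS_A)}+\frac{\sqrt{[(\lambda\theta+V_k^2)-\lambda(1/S_A+V_k)]^2-4\lambda\theta V_k^2}}{2\lambda\theta(1/S_A+V_k)},\ S_A\left(\frac{V_k}{\sqrt{\lambda\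theta}}-1\right)\right\}.$$
   Context: Decentralized sensing scheme in the large-network limit: $V_k$ is the fusion center's prior variance; each of infinitely many sensors activates with a probability such that the normalized activation probability per channel is $\zeta$, chooses one of $B$ channels uniformly (collision channel), and, if active, measures with local measurement SNR $S_M$ and ambient SNR $S_A$; the number $R$ of successful transmissions is Binomial with $B$ trials and success probability $\rho(\zeta)=\zeta e^{-\zeta}$, and the aggregate SNR is $RS_AS_M/(S_A+S_M)$. The cost term $\lambda\zeta B(1+\theta S_M)$ is the normalized expected sensing-transmission cost weighted by the Lagrange multiplier $\lambda$. *)

(* Defs.v *)
From Stdlib Require Import Reals.
Open Scope R_scope.

Definition rho (z : R) : R := z * exp (- z).

Definition binom_pmf (B r : nat) (p : R) : R :=
  C B r * p ^ r * (1 - p) ^ (B - r).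

Definition binom_E (B : nat) (p : R) (F : nat -> R) : R :=
  sum_f_R0 (fun r => binom_pmf B r p * F r) B.

Definition nu_hat (V L : R) : R := V / (1 + V * L).

Definition aggSNR (SA SM : R) (r : nat) : R := INR r * SA * SM / (SA + SM).

Definition f_obj (lam theta SA : R) (B : nat) (z SM V : R) : R :=
  binom_E B (rho z) (fun r => nu_hat V (aggSNR SA SM r))
  + lam * z * INR B * (1 + theta * SM).

Definition h_fun (lam theta SA : R) (B : nat) (SM z V : R) : R :=
  - binom_E B (rho z)
      (fun r => (nu_hat V (aggSNR SA SM r)) ^ 2 * (INR r * SA ^ 2 / (SA + SM) ^ 2))
  + lam * z * INR B * theta.

Definition g_fun (lam theta SA : R) (B : nat) (SM z V : R) : R :=
  binom_E B (rho z)
      (fun r => nu_hat V (aggSNR SA SM r) *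
                ((INR r - rho z * INR B) / (rho z * (1 - rho z))))
  + lam * INR B * (exp z / (1 - z)) * (1 + theta * SM).

Definition lam_th (theta SA : R) : R :=
  / (sqrt (1 + 1 / SA) + sqrt theta) ^ 2.

Definition v_th (lam theta SA : R) : R :=
  sqrt (lam * theta) + lam / 2
  + sqrt lam * sqrt (sqrt (lam * theta) + lam / 4 + 1 / SA).

Definition SM_th_min (lam theta SA V : R) : R :=
  (- lam * theta * SA - lam * (1 + V * SA) + V ^ 2 * SA
   - sqrt (((lam * theta + V ^ 2) * SA - lam * (1 + V * SA)) ^ 2
           - 4 * lam * theta * V ^ 2 * SA ^ 2))
  / (2 * lam * theta * (1 + V * SA)).

Definition SM_th_max (lam theta SA V : R) : R :=
  Rmin
    ((- lam * theta * SA - lam * (1 + V * SA) + V ^ 2 * SA)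
       / (2 * lam * theta * (1 + V * SA))
     + sqrt (((lam * theta + V ^ 2) - lam * (1 / SA + V)) ^ 2
             - 4 * lam * theta * V ^ 2)
       / (2 * lam * theta * (1 / SA + V)))
    (SA * (V / sqrt (lam * theta) - 1)).

Definition is_myopic (lam theta SA : R) (B : nat) (V z SM : R) : Prop :=
  0 <= z /\ 0 <= SM /\ (z = 0 -> SM = 0) /\
  forall z' SM', 0 <= z' -> 0 <= SM' ->
    f_obj lam theta SA B z SM V <= f_obj lam theta SA B z' SM' V.

(* Main.v *)
Require Import Defs.
From Stdlib Require Import Reals Lra Psatz FunctionalExtensionality.
From Coquelicot Require Import Coquelicot.
Open Scope R_scope.

Lemma sum_is_derive (F : nat -> R -> R) (F' : nat -> R) n x :
  (forall i, (i <= n)%nat -> is_derive (F i) x (F' i)) ->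
  is_derive (fun y => sum_f_R0 (fun i => F i y) n) x (sum_f_R0 F' n).
Proof.
  induction n as [|n IH]; intros H; simpl.
  - apply H; lia.
  - apply (is_derive_plus (fun y => sum_f_R0 (fun i => F i y) n) (F (S n))).
    + apply IH; intros; apply H; lia.
    + apply H; lia.
Qed.

Lemma C_pos n k : 0 < Binomial.C n k.
Proof.
  unfold Binomial.C. apply Rdiv_lt_0_compat. apply INR_fact_lt_0.
  apply Rmult_lt_0_compat; apply INR_fact_lt_0.
Qed.

Lemma pmf_nonneg B r p : 0 <= p <= 1 -> 0 <= binom_pmf B r p.
Proof.
  intros Hp. unfold binom_pmf. apply Rmult_le_pos. apply Rmult_le_pos.
  left; apply C_pos. apply pow_le; lra. apply pow_le; lra.
Qed.

Lemma binom_sum1 B p : sum_f_R0 (fun r => binom_pmf B r p) B = 1.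
Proof.
  unfold binom_pmf. rewrite <- binomial. replace (p + (1 - p)) with 1 by ring.
  apply pow1.
Qed.

Lemma binom_mean B p : sum_f_R0 (fun r => binom_pmf B r p * INR r) B = INR B * p.
Proof.
  set (y := 1 - p).
  assert (H1 : is_derive (fun x => (x + y) ^ B) p (INR B * (p + y) ^ Nat.pred B)).
  { auto_derive; auto. ring. }
  assert (H2 : is_derive (fun x => sum_f_R0 (fun i => (fun i x => Binomial.C B i * x ^ i * y ^ (B - i)) i x) B) p
     (sum_f_R0 (fun i => Binomial.C B i * (INR i * p ^ Nat.pred i) * y ^ (B - i)) B)).
  { apply sum_is_derive. intros i _. auto_derive; auto. ring. }
  assert (E : forall x, (x + y) ^ B = sum_f_R0 (fun i => (fun i x => Binomial.C B i * x ^ i * y ^ (B - i)) i x) B).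
  { intro x. apply binomial. }
  apply (is_derive_ext _ _ _ _ E) in H1.
  apply is_derive_Reals in H1. apply is_derive_Reals in H2.
  pose proof (uniqueness_limite _ _ _ _ H1 H2) as H3. clear H1 H2. rename H3 into H2. unfold y in H2. replace (p + (1-p)) with 1 in H2 by ring.
  rewrite pow1, Rmult_1_r in H2. rewrite H2, Rmult_comm, scal_sum.
  apply sum_eq. intros i _. unfold binom_pmf, y.
  destruct i as [|i]; simpl; ring.
Qed.

Lemma nu_term V L r : 0 < V -> 0 <= L ->
  V - INR r * (V - nu_hat V L) <= nu_hat V (INR r * L).
Proof.
  intros HV HL. unfold nu_hat.
  assert (Hn : 0 <= INR r) by apply pos_INR.
  assert (Hnn : 0 <= INR r * (INR r - 1)).
  { destruct r. simpl; lra. apply Rmult_le_pos; auto. rewrite S_INR. pose proof (pos_INR r); lra. }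
  assert (Hx : 0 <= V * L) by (apply Rmult_le_pos; lra).
  assert (Hd1 : 0 < 1 + V * (INR r * L)) by (pose proof (Rmult_le_pos _ _ Hn Hx); nra).
  assert (Hd2 : 0 < 1 + V * L) by lra.
  assert (E : V / (1 + V * (INR r * L)) - (V - INR r * (V - V / (1 + V * L)))
            = V * (INR r * (INR r - 1)) * (V * L) ^ 2 / ((1 + V * (INR r * L)) * (1 + V * L))).
  { field. lra. }
  assert (0 <= V * (INR r * (INR r - 1)) * (V * L) ^ 2 / ((1 + V * (INR r * L)) * (1 + V * L))).
  { apply Rdiv_le_0_compat. apply Rmult_le_pos. apply Rmult_le_pos; lra. apply pow2_ge_0.
    apply Rmult_lt_0_compat; lra. }
  lra.
Qed.

Lemma binom_lb B p V L : 0 < V -> 0 <= L -> 0 <= p <= 1 ->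
  V - INR B * p * (V - nu_hat V L) <= binom_E B p (fun r => nu_hat V (INR r * L)).
Proof.
  intros HV HL Hp. unfold binom_E.
  apply Rle_trans with (sum_f_R0 (fun r => binom_pmf B r p * V + (binom_pmf B r p * INR r) * (- (V - nu_hat V L))) B).
  - rewrite plus_sum, <- !scal_sum, binom_sum1, binom_mean. lra.
  - apply sum_growing. intro n. pose proof (pmf_nonneg B n p Hp).
    pose proof (nu_term V L n HV HL). nra.
Qed.

Lemma aggSNR_eq SA SM r : aggSNR SA SM r = INR r * (SA * SM / (SA + SM)).
Proof. unfold aggSNR, Rdiv. ring. Qed.

Lemma rho_0 : rho 0 = 0.
Proof. unfold rho. ring. Qed.

Lemma exp_gt_id z : z < exp z.
Proof.
  destruct (Req_dec z 0) as [->|Hz]. rewrite exp_0; lra.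
  pose proof (exp_ineq1 z Hz). lra.
Qed.

Lemma rho_bounds z : 0 <= z -> 0 <= rho z <= 1.
Proof.
  intros Hz. unfold rho. pose proof (exp_pos (-z)). split. nra.
  pose proof (exp_gt_id z). rewrite exp_Ropp.
  pose proof (exp_pos z).
  apply Rmult_le_reg_r with (exp z); auto. rewrite Rmult_assoc, Rinv_l by lra. lra.
Qed.

Lemma rho_lt z : 0 < z -> rho z < z.
Proof.
  intros Hz. unfold rho. assert (exp (-z) < 1).
  { rewrite <- exp_0. apply exp_increasing. lra. }
  nra.
Qed.

Lemma binom_E_0 B F : binom_E B 0 F = F 0%nat.
Proof.
  unfold binom_E.
  assert (forall n, sum_f_R0 (fun r => binom_pmf B r 0 * F r) n = F 0%nat).
  { induction n; simpl.
    - unfold binom_pmf. rewrite C_n_0. simpl. rewrite Rminus_0_r, pow1. ring.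
    - rewrite IHn. unfold binom_pmf. simpl. ring. }
  apply H.
Qed.

Lemma f_at_0 lam theta SA B SM V : f_obj lam theta SA B 0 SM V = V.
Proof.
  unfold f_obj. rewrite rho_0, binom_E_0. unfold nu_hat, aggSNR. simpl.
  unfold Rdiv. rewrite !Rmult_0_l, Rmult_0_r, Rplus_0_r, Rinv_1. ring.
Qed.

Definition Aval (SA SM V : R) := V - nu_hat V (SA * SM / (SA + SM)).

Lemma f_lb lam theta SA B z SM V : 0 < SA -> 0 <= SM -> 0 < V -> 0 <= z ->
  V + INR B * z * (lam * (1 + theta * SM) - exp (- z) * Aval SA SM V)
  <= f_obj lam theta SA B z SM V.
Proof.
  intros HSA HSM HV Hz. unfold f_obj.
  replace (fun r => nu_hat V (aggSNR SA SM r)) with (fun r => nu_hat V (INR r * (SA * SM / (SA + SM)))).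
  2:{ apply functional_extensionality; intro r. rewrite aggSNR_eq. auto. }
  assert (HL : 0 <= SA * SM / (SA + SM)).
  { apply Rdiv_le_0_compat. nra. lra. }
  pose proof (binom_lb B (rho z) V _ HV HL (rho_bounds z Hz)).
  unfold Aval. unfold rho in *. nra.
Qed.

Lemma quad_bounds a b c s : 0 < a -> a * s ^ 2 + b * s + c < 0 ->
  (- b - sqrt (b ^ 2 - 4 * a * c)) / (2 * a) < s /\
  s < (- b + sqrt (b ^ 2 - 4 * a * c)) / (2 * a).
Proof.
  intros Ha Hq.
  set (D := b ^ 2 - 4 * a * c).
  assert (HD : (2 * a * s + b) ^ 2 < D).
  { assert (E : (2 * a * s + b) ^ 2 - D = 4 * a * (a * s ^ 2 + b * s + c)) by (unfold D; ring).
    assert (4 * a * (a * s ^ 2 + b * s + c) < 0).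
    { assert (0 < 4 * a * - (a * s ^ 2 + b * s + c)) by (apply Rmult_lt_0_compat; lra). lra. }
    lra. }
  assert (D0 : 0 <= D) by (pose proof (pow2_ge_0 (2 * a * s + b)); lra).
  pose proof (sqrt_sqrt D D0). pose proof (sqrt_pos D).
  assert (Habs : - sqrt D < 2 * a * s + b < sqrt D) by nra.
  split.
  - apply Rmult_lt_reg_r with (2 * a). lra. unfold Rdiv. rewrite Rmult_assoc, Rinv_l by lra. lra.
  - apply Rmult_lt_reg_r with (2 * a). lra. unfold Rdiv. rewrite Rmult_assoc, Rinv_l by lra. lra.
Qed.

Lemma thr_le lam theta SA V : 0 < lam -> 0 < theta -> 0 < SA -> 0 < V ->
  V <= sqrt (lam * theta) + lam / 2 + sqrt lam * sqrt (sqrt (lam * theta) + lam / 4 + 1 / SA) ->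
  V <= sqrt lam * (sqrt theta + sqrt (1 / SA + V)).
Proof.
  intros Hl Ht HSA HV H.
  rewrite sqrt_mult in H by lra.
  set (sl := sqrt lam) in *. set (st := sqrt theta) in *.
  assert (Hsl : sl * sl = lam) by (apply sqrt_sqrt; lra).
  assert (Hst : st * st = theta) by (apply sqrt_sqrt; lra).
  assert (sl0 : 0 < sl) by (apply sqrt_lt_R0; lra).
  assert (st0 : 0 < st) by (apply sqrt_lt_R0; lra).
  assert (HiS : 0 < 1 / SA) by (apply Rdiv_lt_0_compat; lra).
  set (m := sqrt (sl * st + lam / 4 + 1 / SA)) in *.
  assert (Hm : m * m = sl * st + lam / 4 + 1 / SA) by (apply sqrt_sqrt; nra).
  assert (m0 : 0 <= m) by apply sqrt_pos.
  set (w := sqrt (1 / SA + V)).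
  assert (Hw : w * w = 1 / SA + V) by (apply sqrt_sqrt; lra).
  assert (w0 : 0 <= w) by apply sqrt_pos.
  destruct (Rle_dec V (sl * st)) as [Hd|Hd]. nra.
  set (d := V - sl * st).
  assert (Hm2 : sl / 2 <= m) by nra.
  assert (Hdd : (d - lam / 2) ^ 2 <= lam * (m * m)).
  { assert (-(sl * m) <= d - lam / 2 <= sl * m) by (unfold d; nra).
    replace (lam * (m * m)) with ((sl * m) ^ 2) by (rewrite <- Hsl; ring). nra. }
  assert (Hd2 : d * d <= (sl * w) * (sl * w)).
  { replace ((sl * w) * (sl * w)) with (lam * (1 / SA + V)) by (rewrite <- Hw, <- Hsl; ring).
    rewrite Hm in Hdd. unfold d in *. nra. }
  assert (d <= sl * w).
  { destruct (Rle_dec d (sl * w)) as [?|Hc]; auto. assert (0 <= sl * w) by nra.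
    assert (sl * w * (sl * w) < d * d) by (apply Rmult_le_0_lt_compat; lra). lra. } unfold d in *. nra.
Qed.

Lemma thr_gt lam theta SA V : 0 < lam -> 0 < theta -> 0 < SA -> 0 < V ->
  sqrt (lam * theta) + lam / 2 + sqrt lam * sqrt (sqrt (lam * theta) + lam / 4 + 1 / SA) < V ->
  sqrt lam * (sqrt theta + sqrt (1 / SA + V)) < V.
Proof.
  intros Hl Ht HSA HV H.
  rewrite sqrt_mult in H by lra.
  set (sl := sqrt lam) in *. set (st := sqrt theta) in *.
  assert (Hsl : sl * sl = lam) by (apply sqrt_sqrt; lra).
  assert (Hst : st * st = theta) by (apply sqrt_sqrt; lra).
  assert (sl0 : 0 < sl) by (apply sqrt_lt_R0; lra).
  assert (st0 : 0 < st) by (apply sqrt_lt_R0; lra).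
  assert (HiS : 0 < 1 / SA) by (apply Rdiv_lt_0_compat; lra).
  set (m := sqrt (sl * st + lam / 4 + 1 / SA)) in *.
  assert (Hm : m * m = sl * st + lam / 4 + 1 / SA) by (apply sqrt_sqrt; nra).
  assert (m0 : 0 <= m) by apply sqrt_pos.
  set (w := sqrt (1 / SA + V)).
  assert (Hw : w * w = 1 / SA + V) by (apply sqrt_sqrt; lra).
  assert (w0 : 0 <= w) by apply sqrt_pos.
  set (d := V - sl * st).
  assert (Hdd : lam * (m * m) < (d - lam / 2) ^ 2).
  { replace (lam * (m * m)) with ((sl * m) ^ 2) by (rewrite <- Hsl; ring).
    assert (0 <= sl * m) by nra. unfold d. nra. }
  assert (Hd2 : (sl * w) * (sl * w) < d * d).
  { replace ((sl * w) * (sl * w)) with (lam * (1 / SA + V)) by (rewrite <- Hw, <- Hsl; ring).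
    rewrite Hm in Hdd. unfold d in *. nra. }
  assert (d0 : 0 < d) by (unfold d; nra).
  assert (sl * w < d).
  { destruct (Rlt_dec (sl * w) d) as [?|Hc]; auto. assert (d <= sl * w) by lra.
    assert (d * d <= sl * w * (sl * w)) by (apply Rmult_le_compat; lra). lra. }
  unfold d in *. nra.
Qed.

Definition Qf lam theta SA V s :=
  lam * theta * (1 + V * SA) * s ^ 2 + (lam * theta * SA + lam * (1 + V * SA) - V ^ 2 * SA) * s + lam * SA.

Lemma gap_eq lam theta SA V s : 0 < SA -> 0 <= s -> 0 < V ->
  lam * (1 + theta * s) - Aval SA s V = Qf lam theta SA V s / (SA + s + V * SA * s).
Proof.
  intros HSA Hs HV. unfold Aval, nu_hat, Qf.
  assert (0 <= V * SA * s) by (apply Rmult_le_pos; nra).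
  assert (E : 1 + V * (SA * s / (SA + s)) = (SA + s + V * SA * s) / (SA + s)) by (field; lra).
  rewrite E. field. split; lra.
Qed.

Lemma Q_nonneg lam theta SA V s : 0 < lam -> 0 < theta -> 0 < SA -> 0 < V -> 0 <= s ->
  V <= v_th lam theta SA -> 0 <= Qf lam theta SA V s.
Proof.
  intros Hl Ht HSA HV Hs H. apply thr_le in H; auto.
  set (sl := sqrt lam) in *. set (st := sqrt theta) in *. set (w := sqrt (1 / SA + V)) in *.
  assert (Hsl : sl * sl = lam) by (apply sqrt_sqrt; lra).
  assert (Hst : st * st = theta) by (apply sqrt_sqrt; lra).
  assert (HiS : 0 < 1 / SA) by (apply Rdiv_lt_0_compat; lra).
  assert (Hw : w * w = 1 / SA + V) by (apply sqrt_sqrt; lra).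
  assert (E : Qf lam theta SA V s = lam * SA * (st * w * s - 1) ^ 2 + s * SA * ((sl * (st + w)) ^ 2 - V ^ 2)).
  { clearbody sl st w. unfold Qf. assert (HV' : V = w * w - 1 / SA) by lra.
    rewrite <- Hsl, <- Hst. rewrite HV'. field. lra. }
  rewrite E. assert (0 <= V) by lra.
  assert (V ^ 2 <= (sl * (st + w)) ^ 2) by (apply pow_incr; lra).
  assert (0 <= lam * SA * (st * w * s - 1) ^ 2) by (apply Rmult_le_pos; [nra|apply pow2_ge_0]).
  assert (0 <= s * SA * ((sl * (st + w)) ^ 2 - V ^ 2)) by (apply Rmult_le_pos; nra).
  lra.
Qed.

Lemma Q_neg_exists lam theta SA V : 0 < lam -> 0 < theta -> 0 < SA -> 0 < V ->
  v_th lam theta SA < V -> exists s, 0 < s /\ Qf lam theta SA V s < 0.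
Proof.
  intros Hl Ht HSA HV H. apply thr_gt in H; auto.
  set (sl := sqrt lam) in *. set (st := sqrt theta) in *. set (w := sqrt (1 / SA + V)) in *.
  assert (Hsl : sl * sl = lam) by (apply sqrt_sqrt; lra).
  assert (Hst : st * st = theta) by (apply sqrt_sqrt; lra).
  assert (HiS : 0 < 1 / SA) by (apply Rdiv_lt_0_compat; lra).
  assert (Hw : w * w = 1 / SA + V) by (apply sqrt_sqrt; lra).
  assert (st0 : 0 < st) by (apply sqrt_lt_R0; lra).
  assert (w0 : 0 < w) by (apply sqrt_lt_R0; lra).
  assert (sl0 : 0 < sl) by (apply sqrt_lt_R0; lra).
  exists (/ (st * w)). split. apply Rinv_0_lt_compat; nra.
  assert (E : forall s, Qf lam theta SA V s = lam * SA * (st * w * s - 1) ^ 2 + s * SA * ((sl * (st + w)) ^ 2 - V ^ 2)).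
  { intro s. clearbody sl st w. unfold Qf. assert (HV' : V = w * w - 1 / SA) by lra.
    rewrite <- Hsl, <- Hst. rewrite HV'. field. lra. }
  rewrite E. replace (st * w * / (st * w) - 1) with 0 by (field; nra).
  assert (0 < sl * (st + w)) by nra.
  assert ((sl * (st + w)) ^ 2 < V ^ 2) by (simpl; rewrite !Rmult_1_r; apply Rmult_le_0_lt_compat; lra).
  assert (0 < / (st * w) * SA) by (apply Rmult_lt_0_compat; [apply Rinv_0_lt_compat; nra | lra]).
  nra.
Qed.

Lemma SM_bounds lam theta SA V s : 0 < lam -> 0 < theta -> 0 < SA -> 0 < V ->
  Qf lam theta SA V s < 0 ->
  SM_th_min lam theta SA V <= s /\
  s <= (- lam * theta * SA - lam * (1 + V * SA) + V ^ 2 * SA)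
       / (2 * lam * theta * (1 + V * SA))
     + sqrt (((lam * theta + V ^ 2) - lam * (1 / SA + V)) ^ 2
             - 4 * lam * theta * V ^ 2)
       / (2 * lam * theta * (1 / SA + V)).
Proof.
  intros Hl Ht HSA HV HQ.
  set (a := lam * theta * (1 + V * SA)).
  set (b := lam * theta * SA + lam * (1 + V * SA) - V ^ 2 * SA).
  set (c := lam * SA).
  assert (Ha : 0 < a) by (unfold a; apply Rmult_lt_0_compat; nra).
  assert (HQ' : a * s ^ 2 + b * s + c < 0) by exact HQ.
  destruct (quad_bounds a b c s Ha HQ') as [H1 H2].
  assert (ED : ((lam * theta + V ^ 2) * SA - lam * (1 + V * SA)) ^ 2
           - 4 * lam * theta * V ^ 2 * SA ^ 2 = b ^ 2 - 4 * a * c) by (unfold a, b, c; ring).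
  assert (D0 : 0 <= b ^ 2 - 4 * a * c).
  { assert (4 * a * (a * s ^ 2 + b * s + c) < 0).
    { assert (0 < 4 * a * - (a * s ^ 2 + b * s + c)) by (apply Rmult_lt_0_compat; lra). nra. }
    assert ((2 * a * s + b) ^ 2 - (b ^ 2 - 4 * a * c) = 4 * a * (a * s ^ 2 + b * s + c)) by ring.
    pose proof (pow2_ge_0 (2 * a * s + b)). lra. }
  split.
  - unfold SM_th_min. rewrite ED. left.
    replace (- lam * theta * SA - lam * (1 + V * SA) + V ^ 2 * SA) with (- b) by (unfold b; ring).
    replace (2 * lam * theta * (1 + V * SA)) with (2 * a) by (unfold a; ring). exact H1.
  - assert (ED2 : ((lam * theta + V ^ 2) - lam * (1 / SA + V)) ^ 2 - 4 * lam * theta * V ^ 2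
                = (sqrt (b ^ 2 - 4 * a * c) / SA) ^ 2).
    { replace (sqrt (b ^ 2 - 4 * a * c) / SA) with (sqrt (b ^ 2 - 4 * a * c) * / SA) by reflexivity. rewrite Rpow_mult_distr, pow2_sqrt by auto.
      unfold a, b, c. field. lra. }
    rewrite ED2, sqrt_pow2.
    2:{ apply Rmult_le_pos; [apply sqrt_pos | left; apply Rinv_0_lt_compat; lra]. }
    left. eapply Rlt_le_trans. exact H2. right.
    unfold a, b. field. repeat split; try lra. nra.
Qed.

Lemma sum_opp (G : nat -> R) n : sum_f_R0 (fun i => - G i) n = - sum_f_R0 G n.
Proof. induction n; simpl; [ring| rewrite IHn; ring]. Qed.

Lemma derive_SM lam theta SA B z SM V : 0 < SA -> 0 < SM -> 0 < V ->
  is_derive (fun s => f_obj lam theta SA B z s V) SM (h_fun lam theta SA B SM z V).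
Proof.
  intros HSA HSM HV.
  unfold f_obj, h_fun, binom_E.
  rewrite <- sum_opp.
  apply (is_derive_plus (fun s => sum_f_R0 (fun r => binom_pmf B r (rho z) * nu_hat V (aggSNR SA s r)) B)
                        (fun s => lam * z * INR B * (1 + theta * s))).
  - apply (sum_is_derive (fun r s => binom_pmf B r (rho z) * nu_hat V (aggSNR SA s r))).
    intros i _. unfold nu_hat, aggSNR.
    assert (0 <= INR i) by apply pos_INR.
    assert (0 <= INR i * SA * SM / (SA + SM)).
    { apply Rdiv_le_0_compat; [|lra]. apply Rmult_le_pos; [apply Rmult_le_pos|]; lra. }
    auto_derive.
    + repeat split; try lra. nra.
    + field. repeat split; try lra. assert (0 <= V * (INR i * SA * SM)) by (apply Rmult_le_pos; [lra|apply Rmult_le_pos;[apply Rmult_le_pos|]; lra]). lra.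
  - auto_derive; auto. ring.
Qed.

Definition Dp B p (F : nat -> R) := sum_f_R0 (fun r => Binomial.C B r *
   (INR r * p ^ Nat.pred r * (1 - p) ^ (B - r) - p ^ r * (INR (B - r) * (1 - p) ^ Nat.pred (B - r))) * F r) B.

Lemma derive_Ep B p F : is_derive (fun p => binom_E B p F) p (Dp B p F).
Proof.
  unfold binom_E, Dp, binom_pmf.
  apply (sum_is_derive (fun r p => Binomial.C B r * p ^ r * (1 - p) ^ (B - r) * F r)).
  intros i _. auto_derive; auto. replace (1 + - p) with (1 - p) by ring. ring.
Qed.

Lemma derive_rho z : is_derive rho z (exp (- z) - z * exp (- z)).
Proof. unfold rho. auto_derive; auto. ring. Qed.

Lemma derive_z lam theta SA B z SM V :
  is_derive (fun t => f_obj lam theta SA B t SM V) z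
    ((exp (- z) - z * exp (- z)) * Dp B (rho z) (fun r => nu_hat V (aggSNR SA SM r))
     + lam * INR B * (1 + theta * SM)).
Proof.
  unfold f_obj.
  apply (is_derive_plus (fun t => binom_E B (rho t) (fun r => nu_hat V (aggSNR SA SM r)))
                        (fun t => lam * t * INR B * (1 + theta * SM))).
  - apply (is_derive_comp (fun p => binom_E B p (fun r => nu_hat V (aggSNR SA SM r))) rho).
    apply derive_Ep. apply derive_rho.
  - auto_derive; auto. ring.
Qed.

Lemma pow_pred_mul n x : INR n * x ^ Nat.pred n * x = INR n * x ^ n.
Proof. destruct n; simpl; ring. Qed.

Lemma Dp_eq B p F : 0 < p < 1 ->
  Dp B p F = binom_E B p (fun r => F r * ((INR r - p * INR B) / (p * (1 - p)))).
Proof.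
  intros Hp. unfold Dp, binom_E, binom_pmf. apply sum_eq. intros i Hi.
  assert (HX : INR i * p ^ Nat.pred i = INR i * p ^ i / p).
  { rewrite <- pow_pred_mul. field. lra. }
  assert (HY : INR (B - i) * (1 - p) ^ Nat.pred (B - i) = INR (B - i) * (1 - p) ^ (B - i) / (1 - p)).
  { rewrite <- (pow_pred_mul (B - i)). field. lra. }
  rewrite HX, HY, minus_INR by exact Hi. field. lra.
Qed.

Lemma C_n_1 n : (1 <= n)%nat -> Binomial.C n 1 = INR n.
Proof.
  intros Hn. destruct n as [|m]. lia. unfold Binomial.C.
  replace (S m - 1)%nat with m by lia. simpl (Factorial.fact 1).
  rewrite Rfunctions.fact_simpl, mult_INR. change (INR 1) with 1. rewrite Rmult_1_l. unfold Rdiv. rewrite Rmult_assoc, Rinv_r, Rmult_1_r; [reflexivity|apply INR_fact_neq_0].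
Qed.

Lemma Dp_0 B F : (1 <= B)%nat -> Dp B 0 F = INR B * (F 1%nat - F 0%nat).
Proof.
  intros HB. unfold Dp.
  assert (Hgen : forall n, (1 <= n)%nat -> sum_f_R0 (fun r => Binomial.C B r *
   (INR r * 0 ^ Nat.pred r * (1 - 0) ^ (B - r) - 0 ^ r * (INR (B - r) * (1 - 0) ^ Nat.pred (B - r))) * F r) n
     = INR B * (F 1%nat - F 0%nat)).
  { induction n as [|n IH]; intros Hn. lia.
    destruct n as [|n].
    - simpl. rewrite C_n_0, C_n_1 by auto. rewrite Nat.sub_0_r. rewrite Rminus_0_r, !pow1. ring.
    - rewrite tech5, IH by lia. simpl. ring. }
  apply Hgen; auto.
Qed.

Lemma fermat f c l a b : is_derive f c l -> a < c < b ->
  (forall x, a < x < b -> f c <= f x) -> l = 0.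
Proof.
  intros H Hc Hm. apply is_derive_Reals in H.
  pose (pr := exist _ l H : derivable_pt f c).
  pose proof (deriv_minimum f a b c pr (proj1 Hc) (proj2 Hc) (fun x h1 h2 => Hm x (conj h1 h2))).
  exact H0.
Qed.

Lemma descent f l : is_derive f 0 l -> l < 0 -> exists z, 0 < z /\ f z < f 0.
Proof.
  intros H Hl. apply is_derive_Reals in H.
  destruct (H (- l / 2)) as [d Hd]. lra.
  pose proof (cond_pos d) as Hd0.
  assert (Hh : d / 2 <> 0) by lra.
  assert (Ha : Rabs (d / 2) < d) by (rewrite Rabs_right; lra).
  specialize (Hd (d / 2) Hh Ha). rewrite Rplus_0_l in Hd.
  apply Rabs_def2 in Hd. destruct Hd as [Hd1 Hd2].
  exists (d / 2). split. lra.
  assert ((f (d / 2) - f 0) / (d / 2) < 0) by lra.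
  assert (f (d / 2) - f 0 < 0).
  { apply Rmult_lt_reg_r with (/ (d / 2)). apply Rinv_0_lt_compat; lra.
    rewrite Rmult_0_l. exact H0. }
  lra.
Qed.

Lemma Aval_0 SA V : 0 < SA -> Aval SA 0 V = 0.
Proof. intros. unfold Aval, nu_hat. rewrite Rmult_0_r, Rplus_0_r. unfold Rdiv.
  rewrite Rmult_0_l, Rmult_0_r, Rplus_0_r, Rinv_1. ring. Qed.

Lemma Aval_eq SA SM V : 0 < SA -> 0 <= SM -> 0 < V ->
  Aval SA SM V = V ^ 2 * (SA * SM / (SA + SM)) / (1 + V * (SA * SM / (SA + SM))).
Proof.
  intros. unfold Aval, nu_hat.
  assert (0 <= SA * SM / (SA + SM)) by (apply Rdiv_le_0_compat; nra).
  assert (0 <= V * (SA * SM / (SA + SM))) by (apply Rmult_le_pos; lra). assert (0 <= V * (SA * SM)) by (apply Rmult_le_pos; nra). field. split; lra.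
Qed.

Lemma Aval_pos SA SM V : 0 < SA -> 0 < SM -> 0 < V -> 0 < Aval SA SM V.
Proof.
  intros. rewrite Aval_eq by lra.
  assert (0 < SA * SM / (SA + SM)) by (apply Rdiv_lt_0_compat; nra).
  apply Rdiv_lt_0_compat. apply Rmult_lt_0_compat; [apply pow_lt|]; lra. assert (0 < V * (SA * SM / (SA + SM))) by (apply Rmult_lt_0_compat; lra). lra.
Qed.

Lemma div_le_self x d : 0 <= x -> 1 <= d -> x / d <= x.
Proof.
  intros. apply Rmult_le_reg_r with d. lra. unfold Rdiv. rewrite Rmult_assoc, Rinv_l by lra. nra.
Qed.

Lemma Aval_le SA SM V : 0 < SA -> 0 <= SM -> 0 < V -> Aval SA SM V <= V ^ 2 * SM.
Proof.
  intros. rewrite Aval_eq by lra.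
  assert (HL0 : 0 <= SA * SM / (SA + SM)) by (apply Rdiv_le_0_compat; nra).
  assert (HL : SA * SM / (SA + SM) <= SM).
  { apply Rmult_le_reg_r with (SA + SM). lra. unfold Rdiv. rewrite Rmult_assoc, Rinv_l by lra. nra. }
  assert (Hd : 1 <= 1 + V * (SA * SM / (SA + SM))) by nra.
  apply Rle_trans with (V ^ 2 * (SA * SM / (SA + SM))).
  - apply div_le_self; [apply Rmult_le_pos; [apply pow2_ge_0|lra]|lra].
  - apply Rmult_le_compat_l; [apply pow2_ge_0|lra].
Qed.

Lemma nu_bounds V SA SM r : 0 < V -> 0 < SA -> 0 <= SM ->
  0 <= nu_hat V (aggSNR SA SM r) <= V.
Proof.
  intros. unfold nu_hat. rewrite aggSNR_eq.
  assert (0 <= SA * SM / (SA + SM)) by (apply Rdiv_le_0_compat; nra).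
  assert (0 <= INR r) by apply pos_INR.
  assert (Hd : 1 <= 1 + V * (INR r * (SA * SM / (SA + SM)))).
  { assert (0 <= V * (INR r * (SA * SM / (SA + SM)))) by (apply Rmult_le_pos; [lra|apply Rmult_le_pos; lra]). lra. }
  split. apply Rdiv_le_0_compat; lra.
  unfold Rdiv. apply Rmult_le_reg_r with (1 + V * (INR r * (SA * SM / (SA + SM)))). lra.
  rewrite Rmult_assoc, Rinv_l by lra. nra.
Qed.

Lemma div_neg q d : q < 0 -> 0 < d -> q / d < 0.
Proof. intros. unfold Rdiv. assert (0 < - q * / d) by (apply Rmult_lt_0_compat; [lra|apply Rinv_0_lt_compat; lra]). nra. Qed.

Theorem theorem3 (SA cTX phi theta lam : R) (B : nat) :
  0 < SA -> 0 < cTX -> 0 < phi -> theta = phi / cTX -> (1 <= B)%nat ->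
  0 < lam -> lam < lam_th theta SA ->
  forall V z SM : R,
    0 < V <= 1 ->
    is_myopic lam theta SA B V z SM ->
    (V <= v_th lam theta SA -> z = 0 /\ SM = 0) /\
    (v_th lam theta SA < V ->
       (0 < z < 1) /\ 0 < SM /\
       h_fun lam theta SA B SM z V = 0 /\
       g_fun lam theta SA B SM z V = 0 /\
       z < Rmin 1 (2 * ln (V / sqrt (lam * theta))) /\
       SM_th_min lam theta SA V <= SM <= SM_th_max lam theta SA V).
Proof.
  intros HSA HcTX Hphi Hth HB Hl Hlth V z SM [HV0 HV1] [Hz [HSM [Hz0 Hmin]]].
  assert (Ht : 0 < theta) by (rewrite Hth; apply Rdiv_lt_0_compat; lra).
  assert (HBp : 0 < INR B) by (apply lt_0_INR; lia).
  pose proof (f_lb lam theta SA B z SM V HSA HSM HV0 Hz) as LB.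
  set (A := Aval SA SM V) in *.
  assert (HE1 : forall t, 0 < t -> exp (- t) < 1).
  { intros t Ht0. rewrite <- exp_0. apply exp_increasing. lra. }
  assert (HEp : 0 < exp (- z)) by apply exp_pos.
  assert (Hgap : lam * (1 + theta * SM) - A = Qf lam theta SA V SM / (SA + SM + V * SA * SM))
    by (apply gap_eq; lra).
  assert (Hden : 0 < SA + SM + V * SA * SM).
  { assert (0 <= V * SA * SM) by (apply Rmult_le_pos; [apply Rmult_le_pos|]; lra). lra. }
  split.
  -
    intros Hle.
    assert (HQ := Q_nonneg lam theta SA V SM Hl Ht HSA HV0 HSM Hle).
    assert (Hg0 : 0 <= lam * (1 + theta * SM) - A).
    { rewrite Hgap. apply Rdiv_le_0_compat; lra. }
    destruct (Req_dec z 0) as [Hz'|Hz']; [split; auto|exfalso].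
    assert (Hzp : 0 < z) by lra.
    assert (Hbr : 0 < lam * (1 + theta * SM) - exp (- z) * A).
    { destruct (Req_dec SM 0) as [HS|HS].
      - unfold A. rewrite HS, Aval_0 by lra. nra.
      - assert (HAp : 0 < A) by (apply Aval_pos; lra).
        pose proof (HE1 z Hzp). nra. }
    assert (0 < INR B * z * (lam * (1 + theta * SM) - exp (- z) * A)).
    { apply Rmult_lt_0_compat; [apply Rmult_lt_0_compat|]; lra. }
    specialize (Hmin 0 0 (Rle_refl 0) (Rle_refl 0)).
    rewrite f_at_0 in Hmin. lra.
  -
    intros Hgt.
    destruct (Q_neg_exists lam theta SA V Hl Ht HSA HV0 Hgt) as [s0 [Hs0 HQ0]].
    assert (Hgap0 : lam * (1 + theta * s0) - Aval SA s0 V < 0).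
    { rewrite gap_eq by lra.
      assert (0 < SA + s0 + V * SA * s0) by (assert (0 < V * SA * s0) by (apply Rmult_lt_0_compat; [apply Rmult_lt_0_compat|]; lra); lra).
      apply div_neg; lra. }
    pose proof (derive_z lam theta SA B 0 s0 V) as Hd0.
    rewrite rho_0, Dp_0 in Hd0 by exact HB.
    assert (Hn0 : nu_hat V (aggSNR SA s0 0) = V).
    { rewrite aggSNR_eq. unfold nu_hat. simpl. rewrite !Rmult_0_l, Rmult_0_r, Rplus_0_r. field. }
    assert (Hn1 : nu_hat V (aggSNR SA s0 1) = V - Aval SA s0 V).
    { rewrite aggSNR_eq. unfold Aval. simpl (INR 1). rewrite Rmult_1_l. ring. }
    rewrite Hn0, Hn1 in Hd0.
    destruct (descent _ _ Hd0) as [z0 [Hz0p Hf0]].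
    { rewrite Ropp_0, exp_0. nra. }
    rewrite f_at_0 in Hf0.
    specialize (Hmin z0 s0 ltac:(lra) ltac:(lra)) as Hmin0.
    assert (Hneg : INR B * z * (lam * (1 + theta * SM) - exp (- z) * A) < 0) by lra.
    assert (Hzp : 0 < z).
    { destruct (Req_dec z 0) as [e|e]; [|lra]. rewrite e in Hneg. lra. }
    assert (Hbr : lam * (1 + theta * SM) - exp (- z) * A < 0).
    { destruct (Rlt_dec (lam * (1 + theta * SM) - exp (- z) * A) 0) as [?|Hc]; auto.
      assert (0 <= INR B * z * (lam * (1 + theta * SM) - exp (- z) * A)).
      { apply Rmult_le_pos; [apply Rmult_le_pos|]; lra. } lra. }
    assert (Hl1 : 0 < lam * (1 + theta * SM)) by (assert (0 <= theta * SM) by (apply Rmult_le_pos; lra); apply Rmult_lt_0_compat; lra).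
    assert (HAp : 0 < A) by nra.
    assert (HSMp : 0 < SM).
    { destruct (Req_dec SM 0) as [e|e]; [|lra]. exfalso. unfold A in HAp. rewrite e, Aval_0 in HAp; lra. }
    pose proof (HE1 z Hzp) as Hez.
    assert (HAgt : lam * (1 + theta * SM) < A) by nra.
    assert (HQ : Qf lam theta SA V SM < 0).
    { assert (Hq : Qf lam theta SA V SM = (lam * (1 + theta * SM) - A) * (SA + SM + V * SA * SM)).
      { rewrite Hgap. field. lra. }
      rewrite Hq. assert (0 < (A - lam * (1 + theta * SM)) * (SA + SM + V * SA * SM)) by (apply Rmult_lt_0_compat; lra). nra. }
    destruct (SM_bounds lam theta SA V SM Hl Ht HSA HV0 HQ) as [Hb1 Hb2].
    assert (HlB : 0 < lam * INR B * (1 + theta * SM)) by nra.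
    assert (Hz1 : z < 1).
    { destruct (Rlt_le_dec z 1) as [?|Hz1]; auto. exfalso.
      destruct (Req_dec z 1) as [e|e].
      - pose proof (derive_z lam theta SA B z SM V) as Hdz.
        apply (fermat _ _ _ 0 2) in Hdz; [| lra | intros x Hx; apply Hmin; lra].
        replace (exp (- z) - z * exp (- z)) with 0 in Hdz by (rewrite e; ring). lra.
      - assert (Hc : continuity (fun t => rho t - rho z)).
        { intro x. apply derivable_continuous_pt.
          exists ((exp (- x) - x * exp (- x)) - 0).
          change (derivable_pt_lim (rho - fct_cte (rho z))%F x ((exp (- x) - x * exp (- x)) - 0)).
          apply derivable_pt_lim_minus. apply is_derive_Reals, derive_rho. apply derivable_pt_lim_const. }
        assert (Hr0 : rho 0 - rho z < 0) by (rewrite rho_0; unfold rho; nra).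
        assert (Hr1 : 0 < rho 1 - rho z).
        { unfold rho. assert (Hz1' : z - 1 <> 0) by lra. pose proof (exp_ineq1 _ Hz1') as Hx.
          replace (z - 1) with (z + Ropp 1) in Hx by ring. rewrite exp_plus in Hx.
          rewrite (exp_Ropp z). pose proof (exp_pos z).
          assert (z * / exp z < exp (Ropp 1)).
          { apply Rmult_lt_reg_r with (exp z). lra. rewrite Rmult_assoc, Rinv_l by lra. lra. }
          lra. }

        destruct (IVT _ 0 1 Hc ltac:(lra) Hr0 Hr1) as [t [Ht01 Hrt]].
        specialize (Hmin t SM ltac:(lra) HSM).
        unfold f_obj in Hmin. replace (rho t) with (rho z) in Hmin by lra.
        assert (0 < lam * (z - t) * INR B * (1 + theta * SM)) by
          (replace (lam * (z - t) * INR B * (1 + theta * SM)) with ((z - t) * (lam * INR B * (1 + theta * SM))) by ring;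
           apply Rmult_lt_0_compat; lra).
        lra. }
    assert (Hh : h_fun lam theta SA B SM z V = 0).
    { apply (fermat (fun s => f_obj lam theta SA B z s V) SM _ 0 (SM + 1)).
      apply derive_SM; lra. lra. intros x Hx; apply Hmin; lra. }
    assert (Hrz : 0 < rho z < 1).
    { pose proof (rho_lt z Hzp). unfold rho in *. split; nra. }
    assert (Hg : g_fun lam theta SA B SM z V = 0).
    { pose proof (derive_z lam theta SA B z SM V) as Hdz.
      apply (fermat _ _ _ 0 1) in Hdz; [| lra | intros x Hx; apply Hmin; lra].
      assert (Heq : Dp B (rho z) (fun r => nu_hat V (aggSNR SA SM r)) =
        binom_E B (rho z) (fun r => nu_hat V (aggSNR SA SM r) * ((INR r - rho z * INR B) / (rho z * (1 - rho z))))).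
      { apply Dp_eq; auto. }
      rewrite Heq in Hdz. unfold g_fun.
      set (G := binom_E B (rho z) (fun r => nu_hat V (aggSNR SA SM r) * ((INR r - rho z * INR B) / (rho z * (1 - rho z))))) in *.
      rewrite exp_Ropp in Hdz. pose proof (exp_pos z).
      assert (Hid : G + lam * INR B * (exp z / (1 - z)) * (1 + theta * SM)
                   = (exp z / (1 - z)) * ((/ exp z - z * / exp z) * G + lam * INR B * (1 + theta * SM))).
      { field. lra. }
      rewrite Hid, Hdz. ring. }
    assert (Hlt : 0 < lam * theta) by nra.
    set (sq := sqrt (lam * theta)).
    assert (Hsq : sq * sq = lam * theta) by (apply sqrt_sqrt; lra).
    assert (Hsq0 : 0 < sq) by (apply sqrt_lt_R0; lra).
    assert (HzB : z < 2 * ln (V / sq)).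
    { pose proof (Aval_le SA SM V HSA HSM HV0) as HAle. fold A in HAle.
      assert (H1 : lam * theta * SM < exp (- z) * (V ^ 2 * SM)).
      { assert (exp (- z) * A <= exp (- z) * (V ^ 2 * SM)) by (apply Rmult_le_compat_l; lra). nra. }
      assert (H2 : lam * theta < exp (- z) * V ^ 2).
      { apply Rmult_lt_reg_r with SM. lra. lra. }
      rewrite exp_Ropp in H2. pose proof (exp_pos z).
      assert (H3 : exp z < (V / sq) ^ 2).
      { replace ((V / sq) ^ 2) with (V ^ 2 / (lam * theta)) by (rewrite <- Hsq; field; lra).
        apply Rmult_lt_reg_r with (lam * theta). lra. unfold Rdiv. rewrite Rmult_assoc, Rinv_l by lra.
        apply Rmult_lt_reg_r with (/ exp z). apply Rinv_0_lt_compat; lra.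
        replace (exp z * (lam * theta) * / exp z) with (lam * theta) by (field; lra). lra. }
      assert (0 < V / sq) by (apply Rdiv_lt_0_compat; lra).
      replace (2 * ln (V / sq)) with (ln ((V / sq) ^ 2)) by (rewrite ln_pow by lra; simpl; ring).
      rewrite <- (ln_exp z) at 1. apply ln_increasing; lra. }
    assert (HSMu : SM < SA * (V / sq - 1)).
    { unfold h_fun in Hh.
      set (K := SA ^ 2 / (SA + SM) ^ 2).
      assert (HK : 0 < K) by (apply Rdiv_lt_0_compat; apply pow_lt; lra).
      assert (Hup : binom_E B (rho z) (fun r => nu_hat V (aggSNR SA SM r) ^ 2 * (INR r * SA ^ 2 / (SA + SM) ^ 2))
                    <= V ^ 2 * K * (INR B * rho z)).
      { rewrite <- binom_mean. rewrite scal_sum. unfold binom_E. apply sum_growing. intro n.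
        pose proof (pmf_nonneg B n (rho z) ltac:(lra)).
        pose proof (nu_bounds V SA SM n HV0 HSA HSM) as [Hnu1 Hnu2].
        pose proof (pos_INR n).
        replace (INR n * SA ^ 2 / (SA + SM) ^ 2) with (INR n * K) by (unfold K, Rdiv; ring).
        assert (nu_hat V (aggSNR SA SM n) ^ 2 <= V ^ 2) by (apply pow_incr; lra).
        assert (0 <= INR n * K) by nra.
        assert (nu_hat V (aggSNR SA SM n) ^ 2 * (INR n * K) <= V ^ 2 * (INR n * K)) by (apply Rmult_le_compat_r; lra).
        replace (binom_pmf B n (rho z) * INR n * (V ^ 2 * K)) with (binom_pmf B n (rho z) * (V ^ 2 * (INR n * K))) by ring.
        apply Rmult_le_compat_l; lra. }
      pose proof (rho_lt z Hzp) as Hrl.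
      assert (HV2 : 0 < V ^ 2 * K) by (apply Rmult_lt_0_compat; [apply pow_lt|]; lra).
      assert (H1 : lam * theta * (INR B * z) < V ^ 2 * K * (INR B * z)).
      { assert (V ^ 2 * K * (INR B * rho z) < V ^ 2 * K * (INR B * z)).
        { apply Rmult_lt_compat_l; auto. apply Rmult_lt_compat_l; auto. }
        lra. }
      assert (H2 : lam * theta < V ^ 2 * K).
      { apply Rmult_lt_reg_r with (INR B * z). nra. exact H1. }
      assert (HVK : V ^ 2 * K = (V * SA / (SA + SM)) ^ 2) by (unfold K; field; lra).
      rewrite HVK in H2.
      assert (Hw0 : 0 <= V * SA / (SA + SM)) by (apply Rdiv_le_0_compat; nra).
      assert (H3 : sq < V * SA / (SA + SM)).
      { unfold sq. rewrite <- (sqrt_pow2 (V * SA / (SA + SM))) by exact Hw0.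
        apply sqrt_lt_1; [lra|apply pow2_ge_0|exact H2]. }
      assert (H4 : sq * (SA + SM) < V * SA).
      { apply Rmult_lt_reg_r with (/ (SA + SM)). apply Rinv_0_lt_compat; lra.
        replace (sq * (SA + SM) * / (SA + SM)) with sq by (field; lra). exact H3. }
      assert (H5 : SA + SM < V * SA / sq).
      { apply Rmult_lt_reg_r with sq. lra. replace (V * SA / sq * sq) with (V * SA) by (field; lra). lra. }
      replace (SA * (V / sq - 1)) with (V * SA / sq - SA) by (field; lra). lra. }
    split; [lra|]. split; [lra|]. split; [exact Hh|]. split; [exact Hg|].
    split. apply Rmin_glb_lt; lra.
    split; [exact Hb1|]. unfold SM_th_max. apply Rmin_glb; [exact Hb2| fold sq; lra].
Qed.
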